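(* Let $(\Omega,\mathcal{F},\mathbb{P})$ be an atomless probability space, let $Z_t$ be a $\mathbb{R}^D$-valued random vector (risk factors) whose distribution has compact support, and let $V_t$ (value function) and $U_t$ (its approximation) be real-valued functions on $\operatorname{supp}(Z_t)$, with $V_t$ regular enough that $X_t:=V_t(Z_t)^+\in L^\infty$. Let $z_t^1,\dots,z_t^n\in\operatorname{supp}(Z_t)$ be realizations of $Z_t$ and set $\mathbf{x}_t=(V_t(z_t^i)^+)_{i=1}^n$, $\mathbf{y}_t=(U_t(z_t^i)^+)_{i=1}^n$. Then for any law-invariant exposure measure $\rho$ on $\mathcal{M}_{1,c}(\mathbb{R})$, \[ \left|\rho(X_t)-\widehat{\rho}(\mathbf{y}_t)\right|\le \left|\rho(X_t)-\widehat{\rho}(\mathbf{x}_t)\right|+\Vert V_t-U_t\Vert_\infty . \]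
   Context: $x^+=\max\{x,0\}$. An exposure measure is a map $\rho:L^0(\Omega,\mathcal{F},\mathbb{P})\to\mathbb{R}\cup\{\infty\}$ that is monotone ($X_1\le X_2\Rightarrow\rho(X_1)\le\rho(X_2)$) and cash-additive ($\rho(X+c)=\rho(X)+c$ for $c\in\mathbb{R}$). It is law-invariant if $\rho(X)$ depends only on the distribution function $F_X$ of $X$, so one writes $\rho(X)=\rho(F_X)$; $\mathcal{M}_{1,c}(\mathbb{R})$ denotes the compactly supported probability measures on $\mathbb{R}$, and ''$\rho$ on $\mathcal{M}_{1,c}(\mathbb{R})$'' means $\rho$ regarded as a map on such laws. For a finite sample $\mathbf{x}=(x^i)_{i=1}^n$, the empirical distribution is $F_{\mathbf{x}}(x)=\frac1n\sum_{i=1}^n\mathbb{1}_{\{x\ge x^i\}}$ and the empirical estimator is $\widehat\rho(\mathbf{x})=\rho(F_{\mathbf{x}})$. For a function $f$ on a set $S$, $\Vert f\Vert_\infty=\sup_{s\in S}|f(s)|$ (genuine supremum); here $S=\operatorname{supp}(Z_t)$. *)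

(* Defs.v *)
From HB Require Import structures.
From mathcomp Require Import all_boot all_order all_algebra.
From mathcomp Require Import all_classical all_reals all_analysis.
Set Implicit Arguments. Unset Strict Implicit. Unset Printing Implicit Defensive.
Import Order.TTheory GRing.Theory Num.Theory.
Import numFieldNormedType.Exports.
Local Open Scope classical_set_scope.
Local Open Scope ring_scope.

Definition atomless d (T : measurableType d) (R : realType)
    (P : probability T R) : Prop :=
  forall A : set T, measurable A -> (0 < P A)%E ->
    exists B : set T, [/\ measurable B, B `<=` A & (0 < P B < P A)%E].

Definition cdfRV d (T : measurableType d) (R : realType)
    (P : probability T R) (X : T -> R) : R -> \bar R :=
  fun x => P (X @^-1` `]-oo, x]).

Definition empcdf (R : realType) (n : nat) (x : 'I_n -> R) : R -> \bar R :=
  fun r => (n%:R^-1 * \sum_(i < n) (((x i <= r)%R)%:R : R))%:E.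

(* A law-invariant map rho, given as a map on distribution functions, so
   that rho(X) := rho(F_X).  It is an exposure measure on L^0(Omega,F,P):
   monotone (w.r.t. P-a.s. order) and cash-additive. *)
Definition law_inv_exposure_measure d (T : measurableType d) (R : realType)
    (P : probability T R) (rho : (R -> \bar R) -> \bar R) : Prop :=
  (forall X1 X2 : T -> R, measurable_fun setT X1 -> measurable_fun setT X2 ->
     {ae P, forall w, X1 w <= X2 w} ->
     (rho (cdfRV P X1) <= rho (cdfRV P X2))%E) /\
  (forall (X : T -> R) (c : R), measurable_fun setT X ->
     rho (cdfRV P (fun w => X w + c)) = (rho (cdfRV P X) + c%:E)%E).

Definition supp d (T : measurableType d) (R : realType)
    (P : probability T R) (D : nat) (Z : T -> 'rV[R]_D) : set 'rV[R]_D :=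
  [set z | forall e : R, 0 < e -> (0 < P (Z @^-1` ball z e))%E].

Definition supnorm (R : realType) (A : Type) (S : set A) (f : A -> R) : \bar R :=
  ereal_sup [set (`|f a|)%:E | a in S].

(* Main.v *)
Require Import Defs.
From HB Require Import structures.
From mathcomp Require Import all_boot all_order all_algebra.
From mathcomp Require Import all_classical all_reals all_analysis.
From mathcomp Require Import lra.
Set Implicit Arguments. Unset Strict Implicit. Unset Printing Implicit Defensive.
Import Order.TTheory GRing.Theory Num.Theory.
Import numFieldNormedType.Exports.
Local Open Scope classical_set_scope.
Local Open Scope ring_scope.


Lemma PE (R : realType) (d : measure_display) (T : measurableType d)
  (P : probability T R) (A : set T) : measurable A -> P A = (fine (P A))%:E.
Proof. by move=> mA; rewrite fineK // fin_num_measure. Qed.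

Lemma Pge0 (R : realType) (d : measure_display) (T : measurableType d)
  (P : probability T R) (A : set T) : 0 <= fine (P A).
Proof. by apply: fine_ge0; apply: measure_ge0. Qed.

Lemma Ple1 (R : realType) (d : measure_display) (T : measurableType d)
  (P : probability T R) (A : set T) : measurable A -> fine (P A) <= 1.
Proof.
move=> mA; rewrite -lee_fin -PE //; rewrite -(probability_setT P).
by apply: le_measure => //; rewrite inE.
Qed.

Lemma Ple (R : realType) (d : measure_display) (T : measurableType d)
  (P : probability T R) (A B : set T) : measurable A -> measurable B ->
  A `<=` B -> fine (P A) <= fine (P B).
Proof.
move=> mA mB AB; rewrite -lee_fin -!PE //.
by apply: le_measure => //; rewrite inE.
Qed.

Lemma PU (R : realType) (d : measure_display) (T : measurableType d)
  (P : probability T R) (A B : set T) : measurable A -> measurable B ->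
  A `&` B = set0 -> fine (P (A `|` B)) = fine (P A) + fine (P B).
Proof.
move=> mA mB AB.
by rewrite (measureU P mA mB AB) fineD // fin_num_measure.
Qed.

Lemma PD (R : realType) (d : measure_display) (T : measurableType d)
  (P : probability T R) (A B : set T) : measurable A -> measurable B ->
  B `<=` A -> fine (P (A `\` B)) = fine (P A) - fine (P B).
Proof.
move=> mA mB BA.
rewrite measureD //; last by rewrite ltey_eq fin_num_measure.
by rewrite setIidr // fineB // fin_num_measure.
Qed.


Lemma halving (R : realType) (d : measure_display) (T : measurableType d)
  (P : probability T R) (A : set T) : atomless P -> measurable A ->
  0 < fine (P A) -> forall k : nat, exists B, [/\ measurable B, B `<=` A,
    0 < fine (P B) & fine (P B) <= (2^-1) ^+ k].
Proof.
move=> al mA PA; elim=> [|k [B [mB BA PB PBk]]].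
  by exists A; split => //; rewrite expr0 Ple1.
have [C [mC CB /andP[PC0 PCB]]] : exists C : set T,
    [/\ measurable C, C `<=` B & (0 < P C < P B)%E].
  by apply: al => //; rewrite (PE P mB) lte_fin.
move: PC0 PCB; rewrite (PE P mC) (PE P mB) !lte_fin => PC0 PCB.
have [h|h] := leP (fine (P C)) (fine (P B) / 2).
  exists C; split => //; first by apply: subset_trans CB BA.
  by rewrite exprSr; apply: (le_trans h); rewrite ler_pM2r // ?invr_gt0.
exists (B `\` C); split.
- exact: measurableD.
- by move=> w [] /BA.
- by rewrite PD // subr_gt0.
- rewrite PD // exprSr; apply: le_trans (_ : fine (P B) / 2 <= _).
    by move: h; lra.
  by rewrite ler_pM2r // ?invr_gt0.
Qed.

Lemma small_subset (R : realType) (d : measure_display) (T : measurableType d)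
  (P : probability T R) (A : set T) : atomless P -> measurable A ->
  0 < fine (P A) -> forall e : R, 0 < e -> exists B, [/\ measurable B, B `<=` A,
    0 < fine (P B) & fine (P B) <= e].
Proof.
move=> al mA PA e e0.
pose N := Num.Def.archi_bound e^-1.
have hN : e^-1 < N%:R by apply: archi_boundP; rewrite invr_ge0 ltW.
have [B [mB BA PB PBk]] := halving al mA PA N.
exists B; split => //; apply: (le_trans PBk).
rewrite exprVn; apply: ltW.
rewrite invf_plt ?posrE ?exprn_gt0 //; apply: (lt_le_trans hN).
rewrite -natrX ler_nat; apply: ltnW; exact: ltn_expl.
Qed.


Lemma sierp (R : realType) (d : measure_display) (T : measurableType d)
  (P : probability T R) (A : set T) : atomless P -> measurable A ->
  forall t : R, 0 <= t -> t <= fine (P A) ->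
  exists B, [/\ measurable B, B `<=` A & fine (P B) = t].
Proof.
move=> al mA t t0 tA.
pose Good (Bk C : set T) := [/\ measurable C, C `<=` A `\` Bk &
   fine (P Bk) + fine (P C) <= t].
pose Inv (Bk : set T) := [/\ measurable Bk, Bk `<=` A & fine (P Bk) <= t].
have step : forall Bk, exists C, Inv Bk -> Good Bk C /\
    forall C', Good Bk C' -> fine (P C') <= 2 * fine (P C).
  move=> Bk; have [[mBk BkA PBk]|nI] := boolp.pselect (Inv Bk); last first.
    by exists set0.
  pose S := [set (fine (P C'))%:E | C' in Good Bk].
  have g0 : Good Bk set0.
    by split => //; rewrite measure0 /= addr0.
  have S0 : S 0%:E by exists set0 => //; rewrite measure0.
  have s0 : (0%:E <= ereal_sup S)%E by apply: ereal_sup_ubound.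
  have s1 : (ereal_sup S <= 1%:E)%E.
    by apply: ge_ereal_sup => _ [C' [mC' _ _] <-]; rewrite lee_fin Ple1.
  have sfin : ereal_sup S \is a fin_num by rewrite ge0_fin_numE // (le_lt_trans s1) ?ltry.
  have [sz|spos] := eqVneq (ereal_sup S) 0%:E.
    exists set0 => _; split => // C' gC'.
    rewrite measure0 /= mulr0 -lee_fin -sz; apply: ereal_sup_ubound.
    by exists C'.
  have hlt : ((fine (ereal_sup S) / 2)%:E < ereal_sup S)%E.
    rewrite -{2}(fineK sfin) lte_fin.
    have : 0 < fine (ereal_sup S).
      rewrite lt_neqAle fine_ge0 // andbT eq_sym; apply/eqP => h.
      by move/eqP: spos; apply; rewrite -(fineK sfin) h.
    lra.
  have [_ [C gC <-] hC] := ereal_sup_gt hlt.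
  exists C => _; split => // C' gC'.
  have : ((fine (P C'))%:E <= ereal_sup S)%E by apply: ereal_sup_ubound; exists C'.
  rewrite -(fineK sfin) lee_fin; move: hC; rewrite lte_fin; lra.
have [f hf] := boolp.choice step.
pose B := fix B k := if k is k'.+1 then B k' `|` f (B k') else set0.
have BS k : B k.+1 = B k `|` f (B k) by [].
have InvB : forall k, Inv (B k) /\ Good (B k) (f (B k)) /\
    forall C', Good (B k) C' -> fine (P C') <= 2 * fine (P (f (B k))).
  suff IB : forall k, Inv (B k) by move=> k; split => //; apply: hf.
  elim=> [|k IH]; first by rewrite /Inv /B /=; split => //; rewrite measure0.
  have [[mC CA PC] _] := hf _ IH; case: IH => mBk BkA PBk.
  have disj : B k `&` f (B k) = set0.
    by apply/seteqP; split => // w [bw /CA [_]].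
  split; first exact: measurableU.
  - by move=> w [/BkA|/CA []].
  - by rewrite BS PU.
have mB k : measurable (B k) by case: (InvB k) => -[].
have Bmono : forall k m, (k <= m)%N -> B k `<=` B m.
  move=> k m /subnK <-; elim: (m - k)%N => [|j IH] //.
  by rewrite addSn BS => w /IH bw; left.
pose Binf := \bigcup_k B k.
have mBinf : measurable Binf by apply: bigcupT_measurable.
have BinfA : Binf `<=` A by move=> w [k _ bw]; case: (InvB k) => -[_ /(_ _ bw)].
have PBinf : fine (P Binf) <= t.
  have cv := @nondecreasing_cvg_mu _ _ _ P B mB mBinf
     (fun n m nm => (introT (subsetPset _ _) (Bmono n m nm))).
  have Pk : forall k, ((P \o B) k <= t%:E)%E.
    by move=> k; rewrite /= (PE P (mB k)) lee_fin; case: (InvB k) => -[].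
  have := lime_le (cvgP _ cv) (nearW _ Pk).
  rewrite (cvg_lim _ cv) // => h.
  have h2 : (P Binf <= t%:E)%E by apply: h; typeclasses eauto.
  by move: h2; rewrite (PE P mBinf) lee_fin.
case: (ltgtP (fine (P Binf)) t) => ht.
- have E0 : 0 < fine (P (A `\` Binf)) by rewrite PD // subr_gt0 (lt_le_trans ht).
  have tp : 0 < t - fine (P Binf) by rewrite subr_gt0.
  have [D [mD DE PD0 PDe]] := small_subset al (measurableD mA mBinf) E0 tp.
  have gD k : Good (B k) D.
    split => //.
      by move=> w /DE [aw nb]; split => // bk; apply: nb; exists k.
    have : fine (P (B k)) <= fine (P Binf) by apply: Ple => // w bw; exists k.
    lra.
  have lb : forall k, k%:R * (fine (P D) / 2) <= fine (P (B k)).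
    elim=> [|k IH]; first by rewrite mul0r Pge0.
    case: (InvB k) => -[_ BkA _] [[_ CA _] hk].
    have disj : B k `&` f (B k) = set0.
      by apply/seteqP; split => // w [bw /CA [_]].
    rewrite BS PU // ?mB //; last by case: (InvB k) => _ [[]].
    have -> : k.+1%:R = k%:R + 1 :> R by rewrite natr1.
    rewrite mulrDl mul1r; have := hk D (gD k); move: IH; set a := k%:R * _; lra.
  pose N := Num.Def.archi_bound (t / (fine (P D) / 2)).
  have hN : t / (fine (P D) / 2) < N%:R.
    by apply: archi_boundP; apply: divr_ge0 => //; lra.
  have := lb N; case: (InvB N) => -[_ _ PBN] _.
  move: hN; rewrite ltr_pdivrMr; last lra.
  lra.
- by move: PBinf; rewrite leNgt ht.
- by exists Binf.
Qed.


Lemma partition (R : realType) (d : measure_display) (T : measurableType d)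
  (P : probability T R) (c : R) : atomless P -> 0 <= c -> forall m E,
  measurable E -> fine (P E) = m.+1%:R * c ->
  exists A : nat -> set T, [/\ forall i, measurable (A i),
    forall i, (i <= m)%N -> fine (P (A i)) = c,
    forall i, A i `<=` E,
    (forall i j w, A i w -> A j w -> i = j) &
    (forall w, E w -> exists i, (i <= m)%N /\ A i w)].
Proof.
move=> al c0; elim=> [|m IH] E mE PE0.
  exists (fun i => if i == 0%N then E else set0); split.
  - by move=> i /=; case: ifP.
  - by move=> i; rewrite leqn0 => /eqP -> /=; rewrite PE0 mul1r.
  - by move=> i /=; case: ifP => // _ w.
  - by move=> i j w /=; case: ifP => [/eqP ->|//]; case: ifP => [/eqP ->|//].
  - by move=> w Ew; exists 0%N.
have [B [mB BE PB]] : exists B, [/\ measurable B, B `<=` E & fine (P B) = c].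
  apply: sierp => //; rewrite PE0 -[X in X <= _]mul1r ler_wpM2r // ler1n //.
have mE' : measurable (E `\` B) by apply: measurableD.
have PE' : fine (P (E `\` B)) = m.+1%:R * c.
  by rewrite PD // PE0 PB -natr1 mulrDl mul1r addrK.
have [A' [mA' PA' AE' dA' cA']] := IH _ mE' PE'.
exists (fun i => if i is i'.+1 then A' i' else B); split.
- by case.
- by case.
- by case=> [//|i] w /AE' [].
- case=> [|i] [|j] w //=.
  + by move=> bw /AE' [].
  + by move=> /AE' [] _ nb /nb.
  + by move=> ai aj; rewrite (dA' _ _ _ ai aj).
- move=> w Ew; have [bw|nbw] := boolp.pselect (B w); first by exists 0%N.
  by have [i [im ai]] := cA' w (conj Ew nbw); exists i.+1.
Qed.

Lemma exists_g (R : realType) (d : measure_display) (T : measurableType d)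
  (P : probability T R) (n : nat) : atomless P ->
  exists g : T -> 'I_n.+1, (forall i, measurable (g @^-1` [set i])) /\
    (forall i, fine (P (g @^-1` [set i])) = n.+1%:R^-1).
Proof.
move=> al.
have h1 : 0 <= n.+1%:R^-1 :> R by rewrite invr_ge0.
have h2 : fine (P setT) = n.+1%:R * n.+1%:R^-1 by rewrite probability_setT divff.
have [A [mA PA _ dA cA]] := partition al h1 measurableT h2.
pose g w : 'I_n.+1 := inord (proj1_sig (cid (cA w I))).
have gP w : A (g w) w.
  rewrite /g; case: (cid _) => k [kn Ak] /=; by rewrite inordK.
have gE i w : A i w -> i = g w.
  by move=> Ai; apply: dA Ai (gP w).
have pre (i : 'I_n.+1) : g @^-1` [set i] = A i.
  apply/seteqP; split => w /=.
    by move=> <-.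
  by move=> /gE ei; apply: val_inj.
exists g; split => i; rewrite pre //.
by apply: PA; rewrite -ltnS.
Qed.


Lemma rep_gen (R : realType) (d : measure_display) (T : measurableType d)
  (P : probability T R) (n : nat) (g : T -> 'I_n.+1)
  (mg : forall i, measurable (g @^-1` [set i]))
  (Pg : forall i, fine (P (g @^-1` [set i])) = n.+1%:R^-1)
  (x : 'I_n.+1 -> R) (S : set R) :
  measurable ((fun w => x (g w)) @^-1` S) /\
  fine (P ((fun w => x (g w)) @^-1` S)) =
    \sum_(j < n.+1) (if `[< S (x j) >] then n.+1%:R^-1 else 0).
Proof.
pose U k := [set w | (g w < k)%N /\ S (x (g w))].
pose V k := [set w | nat_of_ord (g w) = k /\ S (x (g w))].
have VE k : V k = if (k < n.+1)%N && `[< S (x (inord k)) >]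
    then g @^-1` [set inord k] else set0.
  apply/seteqP; split => w.
    move=> [gk Sx]; have kn : (k < n.+1)%N by rewrite -gk ltn_ord.
    have gi : g w = inord k by apply: val_inj; rewrite /= inordK.
    by rewrite kn -gi /=; move/asboolP: Sx => ->.
  case: ifP => // /andP[kn /asboolP Sx] /= gi.
  by split; rewrite gi ?inordK.
have UE k : U k.+1 = U k `|` V k.
  apply/seteqP; split => w /=.
    by move=> [+ Sx]; rewrite ltnS leq_eqVlt => /orP[/eqP gk|gk]; [right|left].
  by move=> [[gk Sx]|[gk Sx]]; split => //; rewrite ?gk // ltnS ltnW.
have mV k : measurable (V k) by rewrite VE; case: ifP.
have claim : forall k, measurable (U k) /\ fine (P (U k)) =
    \sum_(j < k) (if (j < n.+1)%N && `[< S (x (inord j)) >] then n.+1%:R^-1 else 0).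
  elim=> [|k [mU PU']].
    have -> : U 0%N = set0 by apply/seteqP; split => w // [].
    by rewrite big_ord0 measure0.
  rewrite UE; split; first exact: measurableU.
  rewrite PU //; last first.
    by apply/seteqP; split => // w [[gk _] [gk' _]]; move: gk; rewrite gk' ltnn.
  rewrite big_ord_recr /= PU'; congr (_ + _).
  by rewrite VE; case: ifP => _; rewrite ?Pg ?measure0.
have -> : (fun w => x (g w)) @^-1` S = U n.+1.
  by apply/seteqP; split => w //= [].
have [mU ->] := claim n.+1; split => //.
by apply: eq_bigr => i _; rewrite ltn_ord inord_val.
Qed.

Unset Implicit Arguments.

Lemma maxlip (R : realType) (u v s : R) : `|v - u| <= s ->
  Num.max u 0 <= Num.max v 0 + s.
Proof.
rewrite ler_norml => /andP[h1 h2].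
rewrite ge_max; apply/andP; split.
- have : v <= Num.max v 0 by rewrite le_max lexx.
  lra.
- have : 0 <= Num.max v 0 by rewrite le_max lexx orbT.
  lra.
Qed.

Theorem proposition1p1 (R : realType) (d : measure_display)
  (T : measurableType d) (P : probability T R) (D n : nat)
  (Z : T -> 'rV[R]_D) (V U : 'rV[R]_D -> R) (z : 'I_n -> 'rV[R]_D)
  (rho : (R -> \bar R) -> \bar R) :
  atomless P ->
  (forall j : 'I_D, measurable_fun setT (fun w => Z w ord0 j)) ->
  compact (supp P Z) ->
  measurable_fun setT (fun w => Num.max (V (Z w)) 0) ->
  (exists M : R, {ae P, forall w, `|Num.max (V (Z w)) 0| <= M}) ->
  (0 < n)%N ->
  (forall i, supp P Z (z i)) ->
  law_inv_exposure_measure P rho ->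
  (* rho is real-valued on compactly supported laws *)
  (forall X : T -> R, measurable_fun setT X ->
     (exists M : R, {ae P, forall w, `|X w| <= M}) ->
     rho (cdfRV P X) \is a fin_num) ->
  let Xt := fun w => Num.max (V (Z w)) 0 in
  let xt := fun i => Num.max (V (z i)) 0 in
  let yt := fun i => Num.max (U (z i)) 0 in
  (`| rho (cdfRV P Xt) - rho (empcdf yt) |
     <= `| rho (cdfRV P Xt) - rho (empcdf xt) |
        + supnorm (supp P Z) (fun a => (V a - U a)%R))%E.
Proof.
move=> al _ _ mX bX; case: n z => [|n] z; first by rewrite ltnn.
move=> _.
move=> zs hr rfin; have [rmono rcash] := hr; cbv zeta.
set Xt := (fun w => Num.max (V (Z w)) 0).
set xt := (fun i => Num.max (V (z i)) 0).
set yt := (fun i => Num.max (U (z i)) 0).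
have [g [mg Pg]] := exists_g n al.
pose Y (x : 'I_n.+1 -> R) := fun w => x (g w).
have mY x : measurable_fun setT (Y x).
  by move=> _ B _; rewrite setTI; exact: (rep_gen mg Pg x B).1.
have cY x : cdfRV P (Y x) = empcdf x.
  apply: funext => r; rewrite /cdfRV.
  have [mU PU] := rep_gen mg Pg x `]-oo, r].
  rewrite (PE P mU) PU /empcdf; congr EFin; rewrite mulr_sumr.
  apply: eq_bigr => i _; rewrite /= in_itv /= asboolb.
  by case: (x i <= r); rewrite ?mulr1 ?mulr0.
have fY x : rho (cdfRV P (Y x)) \is a fin_num.
  apply: rfin; first exact: mY.
  exists (\sum_i `|x i|); apply: aeW => w; rewrite /Y.
  rewrite (bigD1 (g w)) //= lerDl; exact: sumr_ge0.
have sub i : (`|V (z i) - U (z i)|%:E <= supnorm (supp P Z) (fun a => (V a - U a)%R))%E.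
  by apply: ereal_sup_ubound; exists (z i).
move: sub; case: (supnorm (supp P Z) (fun a => (V a - U a)%R)) => [s0| |] sub.
- have hyx i : yt i <= xt i + s0 by apply: maxlip; rewrite -lee_fin sub.
  have hxy i : xt i <= yt i + s0 by apply: maxlip; rewrite distrC -lee_fin sub.
  have key x y : (forall i, y i <= x i + s0) ->
      (rho (cdfRV P (Y y)) <= rho (cdfRV P (Y x)) + s0%:E)%E.
    move=> hi; rewrite -rcash //.
    have -> : (fun w => Y x w + s0) = Y (fun i => x i + s0) by [].
    apply: rmono; [exact: mY | exact: mY | apply: aeW => w; exact: hi].
  have k1 := key _ _ hyx; have k2 := key _ _ hxy.
  have fa : rho (cdfRV P Xt) \is a fin_num by apply: rfin.
  rewrite -(cY xt) -(cY yt).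
  move: k1 k2 fa (fY xt) (fY yt).
  move: (rho (cdfRV P Xt)) (rho (cdfRV P (Y xt))) (rho (cdfRV P (Y yt))).
  move=> a b c k1 k2 fa fb fc.
  rewrite -(fineK fa) -(fineK fb) -(fineK fc) in k1 k2 *.
  rewrite -!EFinB !abse_EFin -EFinD lee_fin.
  rewrite -EFinD lee_fin in k1; rewrite -EFinD lee_fin in k2.
  apply: le_trans (ler_distD (fine b) _ _) _; rewrite lerD2l ler_norml.
  apply/andP; split; lra.
- rewrite addey ?leey //.
  by rewrite gt_eqF // (lt_le_trans _ (abse_ge0 _)) // ltNy0.
- by move: (sub ord0); rewrite leeNy_eq.
Qed.
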